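(* The forcing notion $Q_*$ is forcing equivalent to Sacks forcing.
   Context: Terms. Fix a set $X$ of variable symbols, each taking values in $\{0,1\}$. An $X$-term $t$ is given by a finite sequence of variables $(v_0,\dots,v_{l-1})$ ($l\ge0$) and a function $f:2^l\to2$; a variable $v$ is identified with the term $((v),\mathrm{id})$. An assignment is a function $a:X\to2$; it extends to terms by $t\circ a=f(v_0\circ a,\dots,v_{l-1}\circ a)$. A substitution $\phi$ maps each variable to an $X$-term; $t\circ\phi$ is obtained by replacing each variable $v$ in $t$ by $\phi(v)$, and for a family $\bar t=(t_i)$, $\bar t\circ\phi=(t_i\circ\phi)$. Terms are identified modulo $t=^*s$ iff $t\circ a=s\circ a$ for all assignments $a$. A term depends only on variables in $Y$ if it is $=^*$ to a term using only variables from $Y$. A term or variable $s$ is determined by terms $t_0,\dots,t_n$ if for all assignments $a,b$, $(t_i\circ a)_{i\le n}=(t_i\circ b)_{i\le n}$ implies $s\circ a=s\circ b$. Let $\tau(n,m)=n+\tfrac12(n+m)(n+m+1)$ and $(i,j)\unlhd(n,m)$ iff $\tau(i,j)\le\tau(n,m)$. With $X=\{x_{i,j}:i,j\in\omega\}$, $Q_*$ is the set of squares $\bar t=(t_{n,m})_{n,m\in\omega}$ of terms such that (1) $t_{n,m}$ depends only on variables $x_{i,j}$ with $(i,j)\unlhd(n,m)$, and (2) each $x_{i,j}$ is determined by finitely many $t_{n,m}$. An element $\phi\in Q_*$ is regarded as the substitution $x_{i,j}\mapsto\phi_{i,j}$; $\bar t\le\bar s$ iff there is $\phi\in Q_*$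 with $\bar t=\bar s\circ\phi$. Sacks forcing is the set of perfect subtrees of $2^{<\omega}$ ordered by inclusion. *)

(* Defs.v *)
From Stdlib Require Import List.
From mathcomp Require Import all_boot.
Set Implicit Arguments. Unset Strict Implicit. Unset Printing Implicit Defensive.

(* A variable x_{i,j} is represented by the pair (i, j). *)
Definition var := (nat * nat)%type.

(* An X-term: a finite sequence of variables (v_0,...,v_{l-1}) together with a
   function f : 2^l -> 2.  f is given as a function on bit lists; only its
   values on lists of length l = size tvars are ever used. *)
Record term := Term { tvars : seq var; tfn : seq bool -> bool }.

Definition assignment := var -> bool.

Definition eval (t : term) (a : assignment) : bool := tfn t (map a (tvars t)).

(* a variable v is identified with the term ((v), id) *)
Definition var_term (v : var) : term := Term [:: v] (fun bs => head false bs).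

Definition substitution := var -> term.

(* t o phi : replace each variable v_k of t by the term phi(v_k). *)
Definition subst (t : term) (phi : substitution) : term :=
  Term (flatten [seq tvars (phi v) | v <- tvars t])
       (fun bs => tfn t [seq tfn (phi vc.1) vc.2
                        | vc <- zip (tvars t)
                                 (reshape [seq size (tvars (phi v)) | v <- tvars t] bs)]).

Definition teq (t s : term) : Prop := forall a : assignment, eval t a = eval s a.

Definition depends_only_on (t : term) (Y : var -> Prop) : Prop :=
  exists s : term, (forall v, v \in tvars s -> Y v) /\ teq t s.

Definition determined_by (s : term) (ts : seq term) : Prop :=
  forall a b : assignment,
    (forall t, In t ts -> eval t a = eval t b) -> eval s a = eval s b.

Definition tau (n m : nat) : nat := n + ((n + m) * (n + m).+1) %/ 2.

Definition tri_le (ij nm : var) : Prop := tau ij.1 ij.2 <= tau nm.1 nm.2.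

Definition square := nat -> nat -> term.

Definition in_Qstar (t : square) : Prop :=
  (forall n m, depends_only_on (t n m) (fun ij => tri_le ij (n, m))) /\
  (forall i j : nat, exists F : seq var,
      determined_by (var_term (i, j)) [seq t nm.1 nm.2 | nm <- F]).

Definition Qstar := { t : square | in_Qstar t }.

Definition sq_subst (phi : square) : substitution := fun v => phi v.1 v.2.

Definition Qstar_le (t s : Qstar) : Prop :=
  exists phi : Qstar, forall n m : nat,
    teq (proj1_sig t n m) (subst (proj1_sig s n m) (sq_subst (proj1_sig phi))).

Definition tree_set := seq bool -> Prop.

Definition perfect_tree (T : tree_set) : Prop :=
  T [::] /\
  (forall s t : seq bool, prefix s t -> T t -> T s) /\
  (forall s, T s -> exists t, prefix s t /\ T (rcons t false) /\ T (rcons t true)).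

Definition Sacks := { T : tree_set | perfect_tree T }.

Definition Sacks_le (T S : Sacks) : Prop :=
  forall s, proj1_sig T s -> proj1_sig S s.

(* Regular open subsets of a preordered set (P, le): these form the Boolean
   completion RO(P), ordered by inclusion. *)
Definition regular_open (P : Type) (le : P -> P -> Prop) (A : P -> Prop) : Prop :=
  (forall p q, A p -> le q p -> A q) /\
  (forall p, (forall q, le q p -> exists r, le r q /\ A r) -> A p).

Definition set_sub (P : Type) (A B : P -> Prop) : Prop := forall p, A p -> B p.
Definition set_eq (P : Type) (A B : P -> Prop) : Prop := forall p, A p <-> B p.

(* P and Q are forcing equivalent iff their Boolean completions RO(P) and RO(Q)
   are isomorphic (as partial orders under inclusion, i.e. as complete Boolean
   algebras); isomorphism taken up to extensional equality of sets. *)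
Definition forcing_equivalent (P Q : Type) (leP : P -> P -> Prop) (leQ : Q -> Q -> Prop)
  : Prop :=
  exists (f : (P -> Prop) -> (Q -> Prop)) (g : (Q -> Prop) -> (P -> Prop)),
    (forall A, regular_open leP A -> regular_open leQ (f A)) /\
    (forall B, regular_open leQ B -> regular_open leP (g B)) /\
    (forall A, regular_open leP A -> set_eq (g (f A)) A) /\
    (forall B, regular_open leQ B -> set_eq (f (g B)) B) /\
    (forall A1 A2, regular_open leP A1 -> regular_open leP A2 ->
       (set_sub A1 A2 <-> set_sub (f A1) (f A2))).

(* Main.v *)
Require Import Defs.
From mathcomp Require Import all_boot zify.
From Stdlib Require Import Classical ClassicalEpsilon.
Set Implicit Arguments. Unset Strict Implicit.

Definition tri (s : nat) := (s * s.+1) %/ 2.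
Lemma triS s : tri s.+1 = tri s + s.+1.
Proof.
rewrite /tri. have -> : s.+1 * s.+2 = s.+1 * 2 + s * s.+1 by lia.
by rewrite divnMDl // addnC.
Qed.
Lemma tri0 : tri 0 = 0. Proof. by []. Qed.

Definition idx (v : var) : nat := tau v.1 v.2.
Lemma idxE n m : idx (n, m) = n + tri (n + m). Proof. by []. Qed.

Fixpoint pos (k : nat) : var :=
  match k with
  | 0 => (0, 0)
  | k'.+1 => let: (n, m) := pos k' in
             match m with m'.+1 => (n.+1, m') | 0 => (0, n.+1) end
  end.

Lemma idx_pos k : idx (pos k) = k.
Proof.
elim: k => [//|k IH] /=. move: IH. case: (pos k) => n [|m].
- rewrite !idxE !addn0 add0n triS. lia.
- rewrite !idxE. have -> : n.+1 + m = n + m.+1 by lia. lia.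
Qed.

Lemma tri_mono a b : a <= b -> tri a <= tri b.
Proof. elim: b => [|b IH]; first by rewrite leqn0 => /eqP ->.
rewrite leq_eqVlt => /orP [/eqP -> //|]. rewrite ltnS => /IH. rewrite triS. lia. Qed.

Lemma pos_idx_aux k : forall v, idx v = k -> v = pos k.
Proof.
elim: k => [|k IH] [n m]; rewrite idxE.
- case: n => [|n] //= . case: m => [//|m]. rewrite add0n triS. lia.
- case: n => [|n].
  + case: m => [|m]; first by rewrite tri0.
    rewrite add0n triS => H.
    have /IH /= E : idx (m, 0) = k by rewrite idxE addn0; lia.
    by rewrite /= -E.
  + move=> H. have H' : idx (n, m.+1) = k.
      rewrite idxE. have -> : n + m.+1 = n.+1 + m by lia. lia.
    have E := IH _ H'.
    by rewrite /= -E.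
Qed.

Lemma pos_idx v : pos (idx v) = v.
Proof. by rewrite -(pos_idx_aux (erefl (idx v))). Qed.

Lemma eval_subst t phi a : eval (subst t phi) a = eval t (fun v => eval (phi v) a).
Proof.
rewrite /eval /subst /=. congr (tfn t _).
rewrite map_flatten -map_comp.
have -> : [seq size (tvars (phi v)) | v <- tvars t] = shape [seq (map a \o (fun v => tvars (phi v))) v | v <- tvars t].
  by rewrite /shape -map_comp; apply: eq_map => v /=; rewrite size_map.
rewrite flattenK. elim: (tvars t) => [//|v s IH] /=. by rewrite IH.
Qed.

From Stdlib Require Import FunctionalExtensionality.

Definition semF (t : square) (k : nat) (al : nat -> bool) : bool :=
  eval (t (pos k).1 (pos k).2) (fun v => al (idx v)).
Definition causal (F : nat -> (nat -> bool) -> bool) :=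
  forall k al be, (forall j, j <= k -> al j = be j) -> F k al = F k be.
Definition determ (F : nat -> (nat -> bool) -> bool) :=
  forall j, exists L, forall al be, (forall i, i < L -> F i al = F i be) -> al j = be j.
Definition sq (F : nat -> (nat -> bool) -> bool) : square :=
  fun n m => Term (map pos (iota 0 (tau n m).+1)) (fun bs => F (tau n m) (fun j => nth false bs j)).

Lemma evalE (t : square) n m a : eval (t n m) a = semF t (tau n m) (fun j => a (pos j)).
Proof.
rewrite /semF. have -> : pos (tau n m) = (n, m) by exact: (pos_idx (n, m)).
congr eval. apply: functional_extensionality => v. by rewrite pos_idx.
Qed.

Lemma In_mem (T : eqType) (x : T) s : x \in s -> List.In x s.
Proof. elim: s => [//|y s IH]; rewrite inE => /orP [/eqP ->|/IH]; [left|right] => //. Qed.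
Lemma In_mapS (A B : Type) (f : A -> B) x s : List.In x s -> List.In (f x) (map f s).
Proof. elim: s => [//|y s IH] /= [->|/IH]; [left|right] => //. Qed.
Lemma In_mapS_inv (A B : Type) (f : A -> B) y s : List.In y (map f s) -> exists x, List.In x s /\ y = f x.
Proof. elim: s => [//|x s IH] /= [<-|/IH [z [H ->]]]; [exists x; split; [left|]|exists z; split; [right|]] => //. Qed.

Definition bnd (Fl : seq var) := foldr (fun nm acc => maxn (idx nm).+1 acc) 0 Fl.
Lemma bndP Fl nm : List.In nm Fl -> idx nm < bnd Fl.
Proof. elim: Fl => [//|x s IH] /= [->|/IH]; lia. Qed.

Lemma inQ_causal t : in_Qstar t -> causal (semF t).
Proof.
move=> [H1 _] k al be Hab. rewrite /semF.
have [s [Hs Hts]] := H1 (pos k).1 (pos k).2.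
rewrite !Hts /eval. congr (tfn s _). apply/(@eq_in_map (prod nat nat)) => v /Hs.
rewrite /tri_le => Hv. apply: Hab. move: Hv. rewrite -[tau (pos k).1 (pos k).2]/(idx (pos k)) idx_pos. by [].
Qed.

Lemma inQ_determ t : in_Qstar t -> determ (semF t).
Proof.
move=> [_ H2] j. have [Fl HF] := H2 (pos j).1 (pos j).2.
exists (bnd Fl) => al be Hab.
have := HF (fun v => al (idx v)) (fun v => be (idx v)).
have -> : ((pos j).1, (pos j).2) = pos j by case: (pos j).
rewrite /eval /= idx_pos => H; apply: H => t' Hin'.
have [nm [Hin ->]] := In_mapS_inv Hin'.
have := Hab _ (bndP Hin). by rewrite /semF pos_idx.
Qed.

Lemma eval_sq F n m a : causal F -> eval (sq F n m) a = F (tau n m) (fun j => a (pos j)).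
Proof.
move=> HF. rewrite /eval. apply: HF => j Hj.
have -> : tvars (sq F n m) = map pos (iota 0 (tau n m).+1) by [].
rewrite -map_comp (nth_map 0); last by rewrite size_iota.
by rewrite nth_iota.
Qed.

Lemma semF_sq F k al : causal F -> semF (sq F) k al = F k al.
Proof.
move=> HF. rewrite /semF eval_sq // -[tau (pos k).1 (pos k).2]/(idx (pos k)) idx_pos.
apply: HF => j _. by rewrite idx_pos.
Qed.

Lemma sq_inQ F : causal F -> determ F -> in_Qstar (sq F).
Proof.
move=> HF HD; split.
- move=> n m. exists (sq F n m); split=> // v.
  have -> : tvars (sq F n m) = map pos (iota 0 (tau n m).+1) by [].
  case/mapP => j. rewrite mem_iota add0n => /andP [_ Hj] ->.
  rewrite /tri_le -[tau (pos j).1 _]/(idx (pos j)) idx_pos /=. by [].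
- move=> i j. have [L HL] := HD (idx (i, j)).
  exists (map pos (iota 0 L)) => a b Hab.
  rewrite /eval /=. 
  have := HL (fun j => a (pos j)) (fun j => b (pos j)). rewrite pos_idx. apply => i' Hi'.
  have := Hab (sq F (pos i').1 (pos i').2).
  rewrite !eval_sq // -[tau (pos i').1 _]/(idx (pos i')) idx_pos. apply.
  rewrite -map_comp. apply: (In_mapS (fun x => sq F (pos x).1 (pos x).2)). apply: In_mem.
  by rewrite mem_iota.
Qed.

Lemma le_sem_fwd (t s : Qstar) : Qstar_le t s ->
  exists phi : Qstar, forall k al, semF (proj1_sig t) k al = semF (proj1_sig s) k (fun j => semF (proj1_sig phi) j al).
Proof.
move=> [phi H]. exists phi => k al. rewrite /semF H eval_subst. congr eval.
apply: functional_extensionality => v. by rewrite /sq_subst pos_idx.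
Qed.

Lemma le_sem_bwd (t s : Qstar) (phi : Qstar) :
  (forall k al, semF (proj1_sig t) k al = semF (proj1_sig s) k (fun j => semF (proj1_sig phi) j al)) ->
  Qstar_le t s.
Proof.
move=> H. exists phi => n m a. rewrite eval_subst !evalE H. congr semF.
apply: functional_extensionality => j. rewrite /semF /sq_subst. congr eval.
apply: functional_extensionality => v. by rewrite pos_idx.
Qed.

Definition treeF (F : nat -> (nat -> bool) -> bool) (s : seq bool) : Prop :=
  exists al, forall i, i < size s -> nth false s i = F i al.

Lemma tree_rcons F ga al i : (forall j, j < i -> F j ga = F j al) ->
  treeF F (rcons (mkseq (fun j => F j al) i) (F i ga)).
Proof.
move=> H. exists ga => j. rewrite size_rcons size_mkseq ltnS nth_rcons size_mkseq => Hj.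
case: ltnP => Hc. by rewrite nth_mkseq // H.
have -> : j = i by lia. by rewrite eqxx.
Qed.

Lemma treeF_perfect F : causal F -> determ F -> perfect_tree (treeF F).
Proof.
move=> HC HD; split; [|split].
- by exists (fun _ => false).
- move=> s t. rewrite prefixE => /eqP Hst [al Hal]. exists al => i Hi.
  have Hsz : size (take (size s) t) = size s by rewrite Hst.
  rewrite -Hst nth_take //. apply: Hal. move: Hsz. rewrite size_take.
  case: ltnP => Hc; lia.
- move=> s [al Hal]. set be := fun j => if j == size s then ~~ al j else al j.
  have [L HL] := HD (size s).
  case: (classic (exists i, F i al != F i be)) => [Hex|Hn]; last first.
    have : al (size s) = be (size s).
      apply: HL => i _. case: (boolP (F i al == F i be)) => [/eqP //|H]. by case: Hn; exists i.
    rewrite /be eqxx. by case: (al (size s)).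
  case: (ex_minnP Hex) => i Hi Hmin.
  have Hag : forall j, j < i -> F j be = F j al.
    move=> j Hj. case: (boolP (F j al == F j be)) => [/eqP //|/Hmin]. lia.
  have Hge : size s <= i.
    rewrite leqNgt. apply/negP => Hlt. move: Hi. rewrite (HC i al be) ?eqxx //.
    move=> j Hj. rewrite /be. have -> : (j == size s) = false by apply/eqP; lia. by [].
  exists (mkseq (fun j => F j al) i). split.
    rewrite prefixE. apply/eqP. apply: (@eq_from_nth _ false).
      rewrite size_take size_mkseq. case: ltnP => // Hc. by apply/eqP; rewrite eqn_leq Hc Hge.
    move=> j. rewrite size_take size_mkseq => Hj.
    have Hj' : j < size s by move: Hj; case: (ltnP (size s) i) => Hc Hj2; [exact: Hj2 | exact: leq_trans Hj2 Hc].
    rewrite nth_take // nth_mkseq; last by lia. by rewrite Hal.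
  have T1 := @tree_rcons F al al i (fun j _ => erefl).
  have T2 := @tree_rcons F be al i Hag.
  move: Hi T1 T2. case: (F i al); case: (F i be) => //= _ A B; split => //.
Qed.

Lemma RO_transfer (P Q : Type) (leP : P -> P -> Prop) (leQ : Q -> Q -> Prop) (e : P -> Q)
  (Qrefl : forall q, leQ q q) (Qtrans : forall a b c, leQ a b -> leQ b c -> leQ a c)
  (E1 : forall p p', leP p p' -> leQ (e p) (e p'))
  (E2 : forall q, exists p, leQ (e p) q)
  (E3 : forall p p1, leQ (e p1) (e p) -> exists p2, leP p2 p1 /\ leP p2 p) :
  forcing_equivalent leP leQ.
Proof.
pose f := fun (A : P -> Prop) (q : Q) => forall q', leQ q' q -> exists p, A p /\ leQ (e p) q'.
pose g := fun (B : Q -> Prop) (p : P) => B (e p).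
have gf : forall A, regular_open leP A -> set_eq (g (f A)) A.
  move=> A [Ad Ar] p; split.
  - move=> H. apply: Ar => p' Hp'. have [p1 [HA1 H1]] := H (e p') (E1 _ _ Hp').
    have [p2 [H21 H2]] := E3 _ _ H1. exists p2; split => //. exact: Ad H21.
  - move=> Hp q' Hq'. have [p1 H1] := E2 q'. have [p2 [H21 H2]] := E3 p p1 (Qtrans _ _ _ H1 Hq').
    exists p2; split; first exact: Ad H2. exact: Qtrans (E1 _ _ H21) H1.
have fg : forall B, regular_open leQ B -> set_eq (f (g B)) B.
  move=> B [Bd Br] q; split.
  - move=> H. apply: Br => q' Hq'. have [p [Hp H1]] := H q' Hq'. by exists (e p).
  - move=> Hq q' Hq'. have [p H1] := E2 q'. exists p; split => //. exact: Bd (Qtrans _ _ _ H1 Hq').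
exists f, g; split; [|split; [|split; [|split]]].
- move=> A HA; split.
  + move=> q q1 Hq Hq1 q' Hq'. exact: Hq _ (Qtrans _ _ _ Hq' Hq1).
  + move=> q H q' Hq'. have [r [Hr Hrf]] := H q' Hq'. have [p [Hp Hep]] := Hrf r (Qrefl r).
    exists p; split => //. exact: Qtrans Hep Hr.
- move=> B [Bd Br]; split.
  + move=> p p' Hp Hp'. exact: Bd Hp (E1 _ _ Hp').
  + move=> p H. apply: Br => q Hq. have [p1 H1] := E2 q.
    have [p2 [H21 H2]] := E3 p p1 (Qtrans _ _ _ H1 Hq).
    have [p3 [H32 H3]] := H p2 H2. exists (e p3); split => //.
    exact: Qtrans (E1 _ _ H32) (Qtrans _ _ _ (E1 _ _ H21) H1).
- exact: gf.
- exact: fg.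
- move=> A1 A2 HA1 HA2; split.
  + move=> H q Hq q' Hq'. have [p [Hp Hep]] := Hq q' Hq'. exists p; split => //. exact: H.
  + move=> H p Hp. apply/(gf _ HA2). apply: H. by apply/(gf _ HA1).
Qed.

Lemma prefix_nth (u w : seq bool) i : prefix u w -> i < size u -> nth false u i = nth false w i.
Proof. move=> /prefixP [x ->] Hi. by rewrite nth_cat Hi. Qed.
Lemma prefix_size (u w : seq bool) : prefix u w -> size u <= size w.
Proof. exact: size_prefix. Qed.

Lemma ext_ex (q : seq bool -> Prop) (Hq : perfect_tree q) s : q s -> forall M,
  exists u, [/\ prefix s u, M <= size u, q (rcons u false) & q (rcons u true)].
Proof.
case: Hq => [Hr [Hp Hs]] Hqs M.
have Hgrow : forall M, exists u, [/\ prefix s u, M <= size u & q u].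
  elim=> [|m [u [H1 H2 H3]]]; first by exists s; split => //; rewrite prefixE take_size.
  have [t [Ht [Ht0 _]]] := Hs u H3. exists (rcons t false); split => //.
  - exact: prefix_trans H1 (prefix_trans Ht (prefix_rcons _ _)).
  - rewrite size_rcons ltnS. exact: leq_trans H2 (prefix_size Ht).
have [u [H1 H2 H3]] := Hgrow M. have [t [Ht [Ht0 Ht1]]] := Hs u H3.
exists t; split => //. exact: prefix_trans H1 Ht. exact: leq_trans H2 (prefix_size Ht).
Qed.

Definition ext (q : seq bool -> Prop) (Hq : perfect_tree q) (M : nat) (s : seq bool) : seq bool :=
  match excluded_middle_informative (q s) with
  | left H => proj1_sig (constructive_indefinite_description _ (ext_ex Hq H M))
  | right _ => s end.

Lemma extP q (Hq : perfect_tree q) M s : q s ->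
  [/\ prefix s (ext Hq M s), M <= size (ext Hq M s), q (rcons (ext Hq M s) false) & q (rcons (ext Hq M s) true)].
Proof.
move=> H. rewrite /ext. case: excluded_middle_informative => // H'.
by case: constructive_indefinite_description.
Qed.

Fixpoint nodeA q (Hq : perfect_tree q) (M : nat -> nat) (al : nat -> bool) (k : nat) : seq bool :=
  match k with
  | 0 => ext Hq (M 0) [::]
  | k'.+1 => ext Hq (M k) (rcons (nodeA Hq M al k') (al k'))
  end.


Lemma nodeA_inv q (Hq : perfect_tree q) M al k :
  [/\ M k <= size (nodeA Hq M al k), q (rcons (nodeA Hq M al k) false), q (rcons (nodeA Hq M al k) true)
    & prefix (rcons (nodeA Hq M al k) (al k)) (nodeA Hq M al k.+1)].
Proof.
have Hqr : q [::] by case: Hq.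
elim: k => [|k [IH1 IH2 IH3 IH4]].
- have [H1 H2 H3 H4] := extP Hq (M 0) Hqr. split => //.
  have Hb : q (rcons (nodeA Hq M al 0) (al 0)) by case: (al 0).
  by case: (extP Hq (M 1) Hb).
- have Hb : q (rcons (nodeA Hq M al k) (al k)) by case: (al k).
  have [H1 H2 H3 H4] := extP Hq (M k.+1) Hb. split => //.
  have Hb' : q (rcons (nodeA Hq M al k.+1) (al k.+1)) by case: (al k.+1).
  by case: (extP Hq (M k.+2) Hb').
Qed.

Lemma nodeA_mono q (Hq : perfect_tree q) M al k k' : k <= k' -> prefix (nodeA Hq M al k) (nodeA Hq M al k').
Proof.
elim: k' => [|k' IH]; first by rewrite leqn0 => /eqP ->; rewrite prefixE take_size.
rewrite leq_eqVlt => /orP [/eqP ->|]; first by rewrite prefixE take_size.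
rewrite ltnS => /IH H. apply: prefix_trans H _. have [_ _ _ H4] := nodeA_inv Hq M al k'.
exact: prefix_trans (prefix_rcons _ _) H4.
Qed.

Lemma nodeA_ext q (Hq : perfect_tree q) M al be k : (forall j, j < k -> al j = be j) ->
  nodeA Hq M al k = nodeA Hq M be k.
Proof.
elim: k => [//|k IH] H /=. rewrite IH ?H // => j Hj. apply: H. lia.
Qed.

Definition Rc q (Hq : perfect_tree q) M (i : nat) (al : nat -> bool) : bool := nth false (nodeA Hq M al i.+1) i.

Lemma Rc_nth q (Hq : perfect_tree q) M (HM : forall k, k < M k) al i K :
  i < size (nodeA Hq M al K) -> Rc Hq M i al = nth false (nodeA Hq M al K) i.
Proof.
move=> Hi. rewrite /Rc. case: (leqP K i.+1) => HK.
- by rewrite (prefix_nth (nodeA_mono Hq M al HK) Hi).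
- have [H1 _ _ _] := nodeA_inv Hq M al i.+1.
  have Hi' : i < size (nodeA Hq M al i.+1) by apply: leq_trans H1; apply: leq_trans (HM _); apply: leqnSn.
  by rewrite (prefix_nth (nodeA_mono Hq M al (ltnW HK)) Hi').
Qed.

Lemma Rc_causal q (Hq : perfect_tree q) M : causal (Rc Hq M).
Proof.
move=> k al be H. by rewrite /Rc (@nodeA_ext q Hq M al be).
Qed.

Lemma Rc_slow q (Hq : perfect_tree q) M (HM : forall k, k < M k) k al be i :
  (forall j, j <= k -> al j = be j) -> i < M k.+1 -> Rc Hq M i al = Rc Hq M i be.
Proof.
move=> H Hi. have [H1 _ _ _] := nodeA_inv Hq M al k.+1.
have [H1' _ _ _] := nodeA_inv Hq M be k.+1.
rewrite (Rc_nth HM (K := k.+1)); last exact: leq_trans Hi H1.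
rewrite (Rc_nth HM (K := k.+1)); last exact: leq_trans Hi H1'.
by rewrite (@nodeA_ext q Hq M al be).
Qed.

Lemma Rc_tree q (Hq : perfect_tree q) M (HM : forall k, k < M k) al n :
  q (mkseq (fun i => Rc Hq M i al) n).
Proof.
have [H1 H2 _ _] := nodeA_inv Hq M al n.
have Hn : n < size (nodeA Hq M al n) by exact: leq_trans (HM n) H1.
have -> : mkseq (fun i => Rc Hq M i al) n = take n (nodeA Hq M al n).
  apply: (@eq_from_nth _ false).
    rewrite size_mkseq size_take Hn. by [].
  move=> i. rewrite size_mkseq => Hi. rewrite nth_mkseq // nth_take //.
  apply: Rc_nth => //. exact: ltn_trans Hi Hn.
have [_ [Hp _]] := Hq. apply: (Hp _ (rcons (nodeA Hq M al n) false)) => //.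
apply: prefix_trans (prefix_take _ _) (prefix_rcons _ _).
Qed.

Lemma Rc_bit q (Hq : perfect_tree q) M (HM : forall k, k < M k) al k :
  Rc Hq M (size (nodeA Hq M al k)) al = al k.
Proof.
have [_ _ _ H4] := nodeA_inv Hq M al k.
have Hs : size (nodeA Hq M al k) < size (rcons (nodeA Hq M al k) (al k)) by rewrite size_rcons.
rewrite (Rc_nth HM (K := k.+1)); last exact: leq_trans Hs (prefix_size H4).
by rewrite -(prefix_nth H4 Hs) nth_rcons ltnn eqxx.
Qed.

Definition Bn q (Hq : perfect_tree q) M (k : nat) : nat :=
  \max_(s : k.-tuple bool) (size (nodeA Hq M (fun j => nth false s j) k)).+1.
Fixpoint Bd q (Hq : perfect_tree q) M (j : nat) : nat :=
  match j with 0 => Bn Hq M 0 | j'.+1 => Bd Hq M j' + Bn Hq M j end.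

Lemma Bd_ge q (Hq : perfect_tree q) M k j : k <= j -> Bn Hq M k <= Bd Hq M j.
Proof.
elim: j => [|j IH]; first by rewrite leqn0 => /eqP ->.
rewrite leq_eqVlt => /orP [/eqP -> /=|]; first exact: leq_addl.
rewrite ltnS => /IH H /=. exact: leq_trans H (leq_addr _ _).
Qed.

Lemma Bn_gt q (Hq : perfect_tree q) M al k : size (nodeA Hq M al k) < Bn Hq M k.
Proof.
have Hs : size (mkseq al k) == k by rewrite size_mkseq.
rewrite (@nodeA_ext q Hq M al (fun j => nth false (Tuple Hs) j)); last first.
  move=> j Hj /=. by rewrite nth_mkseq.
rewrite /Bn; exact: (leq_bigmax (Tuple Hs)).
Qed.

Lemma Rc_determ q (Hq : perfect_tree q) M (HM : forall k, k < M k) : determ (Rc Hq M).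
Proof.
move=> j. exists (Bd Hq M j) => al be H.
suff : forall k, k <= j.+1 -> forall l, l < k -> al l = be l by move=> /(_ j.+1 (leqnn _) j (ltnSn _)).
elim=> [//|k IH] Hk l. rewrite ltnS leq_eqVlt => /orP [/eqP ->|]; last first.
  apply: IH. exact: ltnW.
have Hag : forall l, l < k -> al l = be l by apply: IH; exact: ltnW.
rewrite -(Rc_bit Hq HM al k) -(Rc_bit Hq HM be k).
rewrite -(@nodeA_ext q Hq M al be k Hag). apply: H.
apply: leq_trans (Bn_gt Hq M al k) _. apply: Bd_ge. by rewrite -ltnS.
Qed.

Definition goodK (F : nat -> (nat -> bool) -> bool) (y : nat -> bool) (s : seq bool) : Prop :=
  forall m, exists al, (forall j, j < size s -> al j = nth false s j) /\ (forall i, i < m -> F i al = y i).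

Lemma goodK_step F y s : goodK F y s -> exists b, goodK F y (rcons s b).
Proof.
move=> H. apply: NNPP => Hn.
have H0 : ~ goodK F y (rcons s false) by move=> H'; apply: Hn; exists false.
have H1 : ~ goodK F y (rcons s true) by move=> H'; apply: Hn; exists true.
have [m0 Hm0] := not_all_ex_not _ _ H0. have [m1 Hm1] := not_all_ex_not _ _ H1.
have [al [Hs Hm]] := H (maxn m0 m1).
have Hb : forall b, al (size s) = b -> False.
  move=> b Hb. case: b Hb => Hb; [apply: Hm1|apply: Hm0]; exists al; (split;
  [ move=> j; rewrite size_rcons ltnS leq_eqVlt => /orP [/eqP ->|Hj];
       [by rewrite nth_rcons ltnn eqxx | by rewrite nth_rcons Hj; apply: Hs]
  | move=> i Hi; apply: Hm; apply: leq_trans Hi _; by rewrite ?leq_maxl ?leq_maxr]).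
exact: (Hb _ erefl).
Qed.

Definition nextb F y (s : seq bool) : bool :=
  match excluded_middle_informative (goodK F y (rcons s true)) with left _ => true | right _ => false end.

Fixpoint br F y (k : nat) : seq bool :=
  match k with 0 => [::] | k'.+1 => rcons (br F y k') (nextb F y (br F y k')) end.

Lemma br_good F y : goodK F y [::] -> forall k, goodK F y (br F y k) /\ size (br F y k) = k.
Proof.
move=> H0. elim=> [//|k [IH Hs]] /=. rewrite size_rcons Hs; split => //.
rewrite /nextb. case: excluded_middle_informative => // Hn.
have [b Hb] := goodK_step IH. by case: b Hb.
Qed.

Lemma br_mono F y k k' : k <= k' -> prefix (br F y k) (br F y k').
Proof.
elim: k' => [|k' IH]; first by rewrite leqn0 => /eqP ->; exact: prefix_refl.
rewrite leq_eqVlt => /orP [/eqP ->|]; first exact: prefix_refl.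
rewrite ltnS => /IH H. exact: prefix_trans H (prefix_rcons _ _).
Qed.

Lemma range_closed F y : causal F -> (forall n, treeF F (mkseq y n)) -> exists al, forall i, F i al = y i.
Proof.
move=> HC Hy.
have H0 : goodK F y [::].
  move=> m. have [al Hal] := Hy m. exists al; split => // i Hi.
  have := Hal i. rewrite size_mkseq nth_mkseq // => ->. by []. by [].
pose al := fun i => nth false (br F y i.+1) i.
exists al => i. have [Hg Hs] := br_good H0 i.+1.
have [ga [Hga Hgy]] := Hg i.+1. rewrite -(Hgy i (ltnSn _)). apply: HC => j Hj.
rewrite Hga; last by rewrite Hs.
rewrite /al. have [_ Hsj] := br_good H0 j.+1. apply: prefix_nth; last by rewrite Hsj.
exact: br_mono.
Qed.

Lemma determ_choice F : determ F -> exists D : nat -> nat,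
  forall k al be, (forall i, i < D k -> F i al = F i be) -> al k = be k.
Proof.
move=> H. exists (fun k => proj1_sig (constructive_indefinite_description _ (H k))) => k.
by case: constructive_indefinite_description.
Qed.

Lemma factor (t : Qstar) (R : nat -> (nat -> bool) -> bool) (D : nat -> nat) :
  (forall k al be, (forall i, i < D k -> semF (proj1_sig t) i al = semF (proj1_sig t) i be) -> al k = be k) ->
  causal R -> determ R ->
  (forall k al be, (forall j, j <= k -> al j = be j) -> forall i, i < D k -> R i al = R i be) ->
  (forall al, exists be, forall i, semF (proj1_sig t) i be = R i al) ->
  exists phi : Qstar, forall k al, R k al = semF (proj1_sig t) k (fun j => semF (proj1_sig phi) j al).
Proof.
move=> HD HRc HRd Hslow Hrg.
have HtC := inQ_causal (proj2_sig t).
pose Pre := fun al => proj1_sig (constructive_indefinite_description _ (Hrg al)).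
have HPre : forall al i, semF (proj1_sig t) i (Pre al) = R i al.
  move=> al. rewrite /Pre. by case: constructive_indefinite_description.
pose G := fun k al => Pre al k.
have GC : causal G.
  move=> k al be Hab. rewrite /G. apply: HD => i Hi. rewrite !HPre. exact: Hslow Hab _ Hi.
have GD : determ G.
  move=> j. have [L HL] := HRd j. exists L => al be H. apply: HL => i Hi.
  rewrite -!HPre. apply: HtC => l Hl. apply: H. exact: leq_ltn_trans Hl Hi.
exists (exist _ (sq G) (sq_inQ GC GD)) => k al /=. rewrite -HPre. congr semF.
apply: functional_extensionality => j. by rewrite semF_sq.
Qed.

Definition eS (t : Qstar) : Sacks :=
  exist _ (treeF (semF (proj1_sig t))) (treeF_perfect (inQ_causal (proj2_sig t)) (inQ_determ (proj2_sig t))).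

Lemma treeF_mkseq F (s : seq bool) : treeF F s -> exists al, s = mkseq (fun i => F i al) (size s).
Proof.
move=> [al H]. exists al. apply: (@eq_from_nth _ false); first by rewrite size_mkseq.
move=> i Hi. by rewrite nth_mkseq // H.
Qed.

Theorem mainTheorem3 : forcing_equivalent Qstar_le Sacks_le.
Proof.
apply: (RO_transfer (e := eS)).
- by move=> q s.
- move=> a b c Hab Hbc s H. exact: Hbc (Hab s H).
- move=> t s Hts. have [phi Hphi] := le_sem_fwd Hts.
  move=> u [al Hal]. exists (fun j => semF (proj1_sig phi) j al) => i Hi. by rewrite Hal // Hphi.
- move=> [q Hq]. pose M := fun k : nat => k.+1.
  have HM : forall k, k < M k by move=> k; exact: ltnSn.
  exists (exist _ (sq (Rc Hq M)) (sq_inQ (Rc_causal Hq M) (Rc_determ Hq HM))).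
  move=> s /treeF_mkseq [al ->] /=. 
  have -> : mkseq (fun i => semF (sq (Rc Hq M)) i al) (size s) = mkseq (fun i => Rc Hq M i al) (size s).
    apply: eq_mkseq => i. exact: semF_sq (Rc_causal Hq M) .
  exact: Rc_tree.
- move=> p p1 H.
  have Hc := inQ_causal (proj2_sig p). have Hd := inQ_determ (proj2_sig p).
  have Hc1 := inQ_causal (proj2_sig p1). have Hd1 := inQ_determ (proj2_sig p1).
  have [D HD] := determ_choice Hd. have [D1 HD1] := determ_choice Hd1.
  pose M := fun k => match k with 0 => 1 | k'.+1 => maxn k.+1 (maxn (D k') (D1 k')) end.
  have HM : forall k, k < M k by case=> [//|k]; rewrite /M leq_max ltnSn.
  have Hq := treeF_perfect Hc1 Hd1.
  pose R := Rc Hq M.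
  have RC : causal R := Rc_causal Hq M. have RD : determ R := Rc_determ Hq HM.
  have Hsl : forall k al be, (forall j, j <= k -> al j = be j) -> forall i, i < maxn (D k) (D1 k) -> R i al = R i be.
    move=> k al be Hab i Hi. apply: Rc_slow Hab _ => //. rewrite /M. apply: leq_trans Hi _. exact: leq_maxr.
  have Hrg1 : forall al, exists be, forall i, semF (proj1_sig p1) i be = R i al.
    move=> al. apply: range_closed => // n. exact: Rc_tree.
  have Hrg : forall al, exists be, forall i, semF (proj1_sig p) i be = R i al.
    move=> al. apply: range_closed => // n. apply: H. exact: Rc_tree.
  have [phi1 Hphi1] := factor HD1 RC RD (fun k al be Hab i Hi => Hsl k al be Hab i (leq_trans Hi (leq_maxr _ _))) Hrg1.
  have [phi Hphi] := factor HD RC RD (fun k al be Hab i Hi => Hsl k al be Hab i (leq_trans Hi (leq_maxl _ _))) Hrg.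
  exists (exist _ (sq R) (sq_inQ RC RD)); split.
  + apply: (le_sem_bwd (phi := phi1)) => k al /=. by rewrite semF_sq // Hphi1.
  + apply: (le_sem_bwd (phi := phi)) => k al /=. by rewrite semF_sq // Hphi.
Qed.
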